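(* Let $G$ and $H$ be two (nonempty) graphs that are not both complete. (i) If $\gamma(G)=1$, then $\mu_t(G+H)=n(G)+n(H)-1$. (ii) If $\gamma(G)\ne 1$ and $\gamma(H)\ne 1$, then $\mu_t(G+H)=n(G)+n(H)-2$.
   Context: All graphs are finite, simple and undirected; $n(G)$ denotes the order and $\gamma(G)$ the domination number of $G$. The join $G+H$ is the graph obtained from disjoint copies of $G$ and $H$ by adding an edge between every vertex of $G$ and every vertex of $H$. Let $F$ be a connected graph and $X\subseteq V(F)$. Two vertices $x,y\in V(F)$ are $X$-visible if there exists a shortest $x,y$-path in $F$ none of whose internal vertices (i.e., vertices other than $x$ and $y$) belongs to $X$. The set $X$ is a total mutual-visibility set of $F$ if every two vertices of $F$ are $X$-visible (the empty set is allowed). The total mutual-visibility number $\mu_t(F)$ is the maximum cardinality of a total mutual-visibility set of $F$. *)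

(* Defs.v *)
From mathcomp Require Import all_boot all_order.
From mathcomp Require Import boolp.
Set Implicit Arguments. Unset Strict Implicit. Unset Printing Implicit Defensive.

Section Graphs.
Variable V : finType.
Implicit Types (e : rel V) (x y : V) (X D : {set V}).

Definition simple_graph e := symmetric e /\ irreflexive e.

Definition complete e := forall x y, x != y -> e x y.

(* p is an x,y-walk: the vertex sequence is x :: p, ending at y *)
Definition is_walk e x y (p : seq V) := path e x p && (last x p == y).

Definition is_shortest e x y (p : seq V) :=
  is_walk e x y p /\ forall q, is_walk e x y q -> size p <= size q.

Definition visible e X x y :=
  exists p, is_shortest e x y p /\
    forall z, z \in x :: p -> z != x -> z != y -> z \notin X.

Definition total_mv_set e X := forall x y, visible e X x y.

Definition mu_t e : nat := \max_(X : {set V} | `[< total_mv_set e X >]) #|X|.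

Definition dominating e D :=
  [forall v, (v \in D) || [exists u in D, e u v]].

Definition domination_number e : nat :=
  \big[minn/#|V|]_(D : {set V} | dominating e D) #|D|.

End Graphs.

Definition join_rel (T U : finType) (eT : rel T) (eU : rel U) : rel (T + U)%type :=
  fun a b => match a, b with
             | inl x, inl y => eT x y
             | inr x, inr y => eU x y
             | _, _ => true
             end.

(* Main.v *)
Require Import Defs.
From mathcomp Require Import all_boot all_order.
From mathcomp Require Import boolp.
From mathcomp Require Import zify.
Set Implicit Arguments. Unset Strict Implicit. Unset Printing Implicit Defensive.

Lemma bigmin_le_seq (I : eqType) (r : seq I) (P : pred I) (F : I -> nat) m i0 :
  i0 \in r -> P i0 -> \big[minn/m]_(i <- r | P i) F i <= F i0.
Proof.
elim: r => //= x r IH; rewrite inE big_cons => /orP [/eqP<- Pi|].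
  by rewrite Pi geq_minl.
move=> ir Pi; case: ifP => _; last exact: IH.
by rewrite geq_min IH ?orbT.
Qed.

Section Gen.
Variable V : finType.
Variable e : rel V.

Lemma dom_ge1 : 0 < #|V| -> 0 < domination_number e.
Proof.
move=> hV; rewrite /domination_number.
apply: (big_ind (fun z => 0 < z)) => //.
  by move=> x y hx hy; rewrite leq_min hx hy.
move=> D /forallP hD; apply/card_gt0P.
move/card_gt0P: hV => [v _].
case/orP: (hD v) => [hv|/existsP [u /andP [hu _]]]; by eexists; eauto.
Qed.

Lemma dom_le1 w : (forall v, v != w -> e w v) -> domination_number e <= 1.
Proof.
move=> hw; rewrite /domination_number.
have -> : 1 = #|[set w]| by rewrite cards1.
apply: bigmin_le_seq; first exact: mem_index_enum.
apply/forallP => v; case: (eqVneq v w) => [->|nvw]; first by rewrite set11.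
apply/orP; right; apply/existsP; exists w; by rewrite set11 hw.
Qed.

Lemma dom_eq1 : domination_number e = 1 -> exists w, forall v, v != w -> e w v.
Proof.
rewrite /domination_number.
have : (\big[minn/#|V|]_(D | dominating e D) #|D| = #|V|) \/
  exists D, dominating e D /\ #|D| = \big[minn/#|V|]_(D | dominating e D) #|D|.
  apply: (big_ind (fun z => z = #|V| \/ exists D, dominating e D /\ #|D| = z)).
  - by left.
  - move=> x y hx hy; by case: (leqP x y).
  - by move=> D hD; right; exists D.
case=> [->|[D [hD <-]]] h1.
  have [w _] : exists w : V, w \in V by apply/card_gt0P; rewrite h1.
  exists w => v nvw; exfalso.
  have : #|[set w; v]| <= #|V| by apply: max_card.
  by rewrite cards2 eq_sym nvw h1.
have [w Dw] := cards1P (introT eqP h1); subst D; exists w => v nvw.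
move/forallP: hD => /(_ v); rewrite inE (negbTE nvw) /=.
by case/existsP => u; rewrite inE => /andP [/eqP -> ].
Qed.

Lemma vis_suff (X : {set V}) :
  (forall a b, a != b -> ~~ e a b -> exists c, [&& e a c, e c b & c \notin X]) ->
  total_mv_set e X.
Proof.
move=> H a b; case: (eqVneq a b) => [<-|nab].
  exists [::]; split; first by split; [rewrite /is_walk /= eqxx|].
  by move=> z; rewrite inE => /eqP ->; rewrite eqxx.
case eab: (e a b).
  exists [:: b]; split.
    split; first by rewrite /is_walk /= eab eqxx.
    move=> [|q0 q] //; rewrite /is_walk /= => /eqP E.
    by rewrite E eqxx in nab.
  by move=> z; rewrite !inE => /orP [/eqP->|/eqP->]; rewrite eqxx.
have [c /and3P [ac cb cX]] := H a b nab (negbT eab).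
exists [:: c; b]; split.
  split; first by rewrite /is_walk /= ac cb eqxx.
  move=> [|q0 [|q1 q]] //; rewrite /is_walk /=.
    by move=> /eqP E; rewrite E eqxx in nab.
  by rewrite andbT => /andP [h /eqP E]; rewrite -E h in eab.
move=> z; rewrite !inE => /or3P [/eqP->|/eqP->|/eqP->]; rewrite ?eqxx //.
Qed.

Lemma vis_nec (X : {set V}) a b c : irreflexive e -> visible e X a b -> a != b -> ~~ e a b ->
  e a c -> e c b -> exists c', [&& e a c', e c' b & c' \notin X].
Proof.
move=> irr [p [[wp sh] int]] nab nab' ac cb.
have := sh [:: c; b]; rewrite /is_walk /= ac cb eqxx => /(_ isT).
case: p wp int sh => [|p0 [|p1 [|p2 p]]] //=; rewrite /is_walk /=.
- by move=> /eqP E; rewrite E eqxx in nab.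
- by rewrite andbT => /andP [h /eqP E]; rewrite -E h in nab'.
- rewrite andbT => /andP [/andP [h1 h2] /eqP E] int _ _; subst p1.
  exists p0; rewrite h1 h2 /=; apply: int.
  + by rewrite !inE eqxx orbT.
  + by apply/eqP => E; rewrite E irr in h1.
  + by apply/eqP => E; rewrite E irr in h2.
Qed.

End Gen.

Theorem corollary2p7 (T U : finType) (eT : rel T) (eU : rel U) :
  simple_graph eT -> simple_graph eU ->
  0 < #|T| -> 0 < #|U| ->
  ~ (complete eT /\ complete eU) ->
  (domination_number eT = 1 ->
     mu_t (join_rel eT eU) = #|T| + #|U| - 1) /\
  (domination_number eT <> 1 -> domination_number eU <> 1 ->
     mu_t (join_rel eT eU) = #|T| + #|U| - 2).
Proof.
move=> [sT iT] [sU iU] hT hU nc.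
set E := join_rel eT eU.
have irrE : irreflexive E by case => x /=; [apply: iT|apply: iU].
have [t0 _] : exists t0 : T, t0 \in T by apply/card_gt0P.
have [u0 _] : exists u0 : U, u0 \in U by apply/card_gt0P.
have cardV : #|{: T + U}| = #|T| + #|U| := card_sum _ _.
have cn : forall a b, ~~ E a b -> exists c, E a c && E c b.
  by case=> x [] y //= _; [exists (inr u0) | exists (inl t0)].
have ncE : exists a b, a != b /\ ~~ E a b.
  case: (boolP [forall x : T, forall y : T, (x != y) ==> eT x y]) => hcT.
    case: (boolP [forall x : U, forall y : U, (x != y) ==> eU x y]) => hcU.
      exfalso; apply: nc; split => x y nxy.
        by move/forallP: hcT => /(_ x) /forallP /(_ y) /implyP; apply.
      by move/forallP: hcU => /(_ x) /forallP /(_ y) /implyP; apply.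
    move: hcU; rewrite negb_forall => /existsP [x]; rewrite negb_forall.
    move=> /existsP [y]; rewrite negb_imply => /andP [nxy nE].
    by exists (inr x), (inr y).
  move: hcT; rewrite negb_forall => /existsP [x]; rewrite negb_forall.
  move=> /existsP [y]; rewrite negb_imply => /andP [nxy nE].
  by exists (inl x), (inl y).
have witness : forall X0 : {set T + U}, total_mv_set E X0 ->
    #|X0| <= mu_t E.
  move=> X0 H0; rewrite /mu_t.
  exact: (@leq_bigmax_cond _ (fun X : {set T + U} => `[< total_mv_set E X >])
            (fun X => #|X|) X0 (asboolT H0)).
split.
  move=> /dom_eq1 [w hw].
  apply/eqP; rewrite eqn_leq; apply/andP; split.
    rewrite /mu_t; apply/bigmax_leqP => X /asboolP HX.
    have [a [b [nab nE]]] := ncE.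
    have [c /andP [ac cb]] := cn a b nE.
    have [v /and3P [_ _ vX]] := vis_nec irrE (HX a b) nab nE ac cb.
    have : X \proper setT by rewrite properT; apply/eqP => XT; rewrite XT inE in vX.
    move/proper_card; rewrite cardsT cardV; lia.
  have H0 : total_mv_set E (~: [set inl w]).
    apply: vis_suff; case=> x [] y //= nab nE.
      have xw : x != w.
        apply/eqP => xw; subst x; move: nE; rewrite hw //.
        by apply: contraNneq nab => ->.
      have yw : y != w.
        apply/eqP => yw; subst y; move: nE; rewrite sT hw //.
      by exists (inl w); rewrite /= sT !hw // !inE eqxx.
    exists (inl w); rewrite /E /= !inE. by rewrite eqxx.
  have := witness _ H0; rewrite cardsC1 cardV; lia.
move=> hdT hdU.
have nuT : forall w, exists t, (t != w) && ~~ eT w t.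
  move=> w; case: (boolP [exists t, (t != w) && ~~ eT w t]) => [/existsP //|/existsPn H]; exfalso; apply: hdT.
  apply/eqP; rewrite eqn_leq dom_ge1 // andbT; apply: (@dom_le1 _ _ w) => v nvw.
  by move: (H v); rewrite nvw /= negbK.
have nuU : forall w, exists t, (t != w) && ~~ eU w t.
  move=> w; case: (boolP [exists t, (t != w) && ~~ eU w t]) => [/existsP //|/existsPn H]; exfalso; apply: hdU.
  apply/eqP; rewrite eqn_leq dom_ge1 // andbT; apply: (@dom_le1 _ _ w) => v nvw.
  by move: (H v); rewrite nvw /= negbK.
have pr : forall a, exists b, a != b /\ ~~ E a b.
  case=> w.
    have [t /andP [tw nE]] := nuT w; exists (inl t); split => //.
    by rewrite eq_sym.
  have [t /andP [tw nE]] := nuU w; exists (inr t); split => //.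
  by rewrite eq_sym.
have nb : forall X a, total_mv_set E X -> exists c, [&& E a c & c \notin X].
  move=> X a HX; have [b [nab nE]] := pr a.
  have [c /andP [ac cb]] := cn a b nE.
  have [v /and3P [av _ vX]] := vis_nec irrE (HX a b) nab nE ac cb.
  by exists v; rewrite av vX.
apply/eqP; rewrite eqn_leq; apply/andP; split.
  rewrite /mu_t; apply/bigmax_leqP => X /asboolP HX.
  have [c1 /andP [_ c1X]] := nb X (inr u0) HX.
  have [c2 /andP [c12 c2X]] := nb X c1 HX.
  have n12 : c1 != c2 by apply/eqP => E12; rewrite E12 irrE in c12.
  have sub : X \subset ~: [set c1; c2].
    apply/subsetP => z zX; rewrite !inE negb_or.
    by apply/andP; split; apply/eqP => E'; subst z; [rewrite zX in c1X|rewrite zX in c2X].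
  have := subset_leq_card sub.
  have := cardsC [set c1; c2]; rewrite cards2 n12 cardV; lia.
have H0 : total_mv_set E (~: [set inl t0; inr u0]).
  apply: vis_suff; case=> x [] y //= nab nE.
    by exists (inr u0); rewrite /E /= !inE eqxx ?orbT.
  by exists (inl t0); rewrite /E /= !inE eqxx ?orbT.
have := witness _ H0.
have := cardsC [set inl t0; inr u0 : T + U]; rewrite cards2 cardV /=; move=> h1 h2; rewrite -h1 addKn; exact: h2.
Qed.
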